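(* Let $r\geq 1$ and let $J_r$ be the $r\times r$ matrix with $1$'s on the diagonal and on the superdiagonal and $0$'s elsewhere. There exists a constant $C=C(r)$ such that if $n\geq 2$ and $x_1,\dots,x_r\in\mathbb R$ satisfy $|x_j|\leq n^{-(j-1)}$ for $1\leq j\leq r$, then $\bigl|\sum_{j=1}^r (J_r^k)_{i,j}x_j\bigr|\leq C$ for $1\leq i\leq r$ and $0\leq k<n$. On the other hand, there exists a constant $C'=C'(r)>0$ such that if $n\geq 2$ and $x_1,\dots,x_r\in\mathbb R$ satisfy $\bigl|\sum_{j=1}^r (J_r^k)_{i,j}x_j\bigr|\leq 1$ for $1\leq i\leq r$ and $0\leq k<n$, then $|x_j|\leq C' n^{-(j-1)}$ for $1\leq j\leq r$. *)

(* Defs.v *)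
From mathcomp Require Import all_boot all_order all_algebra.
From mathcomp Require Import reals.
Set Implicit Arguments. Unset Strict Implicit. Unset Printing Implicit Defensive.
Import Order.TTheory GRing.Theory Num.Theory.
Local Open Scope ring_scope.

(* J_r: r x r matrix with 1 on the diagonal and superdiagonal, 0 elsewhere.
   Indices are 0-based ('I_r): entry (i,j) is 1 iff j = i or j = i+1. *)
Definition Jmx (R : pzRingType) (r : nat) : 'M[R]_r :=
  \matrix_(i < r, j < r) (if (j == i :> nat) || (j == i.+1 :> nat) then 1 else 0).

(* Main.v *)
Require Import Defs.
From mathcomp Require Import all_boot all_order all_algebra.
From mathcomp Require Import reals.
From mathcomp Require Import zify ring lra.
Import Order.TTheory GRing.Theory Num.Theory.
Local Open Scope ring_scope.

Lemma bin_le_exp (n m : nat) : ('C(n, m) <= n ^ m)%N.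
Proof.
apply: (@leq_trans (n ^_ m)).
  by rewrite -bin_ffact leq_pmulr // fact_gt0.
elim: m => [|m IH]; first by [].
by rewrite ffactnSr expnS mulnC leq_mul // leq_subr.
Qed.

Lemma sumJ (R : pzRingType) (r : nat) (F : nat -> R) (j : 'I_r) :
  \sum_(t < r) F t * Jmx R r t j = F j + (if (0 < j)%N then F j.-1 else 0).
Proof.
transitivity (\sum_(t < r) ((if t == j then F t else 0) +
    (if (t.+1 == j :> nat) then F t else 0))).
  apply: eq_bigr => t _; rewrite mxE.
  case: (eqVneq t j) => [->|htj]; rewrite ?eqxx /=.
    by rewrite ifN ?mulr1 ?addr0 // eqn_leq ltnn.
  rewrite /=. case: eqP => [/val_inj/esym/eqP|_]; first by rewrite (negbTE htj).
  by rewrite /= add0r (eq_sym _ t.+1); case: (t.+1 == j :> nat); rewrite ?mulr1 ?mulr0.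
rewrite big_split /=; congr (_ + _).
  by rewrite -big_mkcond /= (big_pred1 j).
case: j => [[|j'] hj] /=.
  by apply: big1 => t _.
have hj' : (j' < r)%N by apply: ltnW.
rewrite -big_mkcond /= (big_pred1 (Ordinal hj')) //.
Qed.

Lemma Jpow (R : pzRingType) (r k : nat) (i j : 'I_r) :
  (Jmx R r ^+ k) i j = if (i <= j)%N then ('C(k, j - i))%:R else 0.
Proof.
elim: k i j => [|k IH] i j.
  rewrite expr0 mxE bin0n.
  case: (eqVneq i j) => [->|hij]; first by rewrite leqnn subnn.
  case: leqP => h //.
  by rewrite subn_eq0 leqNgt ltn_neqAle h andbT (hij : (i:nat) != j).
rewrite exprSr mxE.
pose F := fun t : nat => if (i <= t)%N then ('C(k, t - i))%:R else 0 : R.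
transitivity (\sum_(t<r) F t * Jmx R r t j); first by apply: eq_bigr => t _; rewrite IH.
rewrite sumJ /F.

case: j => [[|j'] hj] /=.
  by rewrite addr0; case: (i <= 0)%N; rewrite ?subn0 ?bin0.
case: (ltngtP i j'.+1) => h.
- rewrite -ltnS h subSn // binS natrD addrC //.
- by rewrite ifN ?add0r // -ltnNge; exact: ltnW h.
- by rewrite h subnn leqNgt ltnSn /= !bin0 addr0.
Qed.
Lemma Dentry (R : pzRingType) (r h : nat) (t s : 'I_r) :
  (Jmx R r ^+ h - 1) t s = if (t < s)%N then ('C(h, s - t))%:R else 0.
Proof.
rewrite !mxE Jpow.
case: (ltngtP t s) => hts.
- by rewrite (_ : (t == s) = false) ?subr0 //; apply/negbTE/negP => /eqP heq; rewrite heq ltnn in hts.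
- by rewrite (_ : (t == s) = false) ?subr0 //; apply/negbTE/negP => /eqP heq; rewrite heq ltnn in hts.
- have -> : t = s by apply: val_inj.
  by rewrite subnn bin0 eqxx subrr.
Qed.

Lemma Dpow (R : realType) (r h m : nat) (i s : 'I_r) :
  [/\ (s < i + m)%N -> ((Jmx R r ^+ h - 1) ^+ m) i s = 0,
      (s = (i + m)%N :> nat) -> ((Jmx R r ^+ h - 1) ^+ m) i s = h%:R ^+ m &
      `|((Jmx R r ^+ h - 1) ^+ m) i s| <= r%:R ^+ m * h%:R ^+ (s - i)].
Proof.
elim: m i s => [|m IH] i s.
  rewrite expr0 mxE addn0 !expr0 mul1r; split.
  - by move=> hsi; rewrite (_ : (i == s) = false) //; apply/negbTE/negP => /eqP heq; rewrite heq ltnn in hsi.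
  - by move=> /val_inj ->; rewrite eqxx.
  - case: (eqVneq i s) => [->|_]; first by rewrite subnn expr0 normr1.
    by rewrite normr0 exprn_ge0.
set D := Jmx R r ^+ h - 1.
have IH1 (i' t' : 'I_r) : (t' < i' + m)%N -> (D ^+ m) i' t' = 0 by case: (IH i' t').
have IH2 (i' t' : 'I_r) : t' = (i' + m)%N :> nat -> (D ^+ m) i' t' = h%:R ^+ m by case: (IH i' t').
have IH3 (i' t' : 'I_r) : `|(D ^+ m) i' t'| <= r%:R ^+ m * h%:R ^+ (t' - i') by case: (IH i' t').
rewrite exprSr mxE; split.
- move=> hs; apply: big1 => t _.
  case: (ltnP t (i + m)) => ht; first by rewrite IH1 // mul0r.
  by rewrite /D Dentry ifN ?mulr0 // -leqNgt; lia.
- move=> hs.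
  have ht0 : (i + m < r)%N by have := ltn_ord s; lia.
  rewrite (bigD1 (Ordinal ht0)) //= big1 ?addr0.
    rewrite (IH2 i (Ordinal ht0)) // /D Dentry /= ifT; last by lia.
    by rewrite hs (_ : (i + m.+1 - (i + m) = 1)%N) ?bin1 ?exprSr //; lia.
  move=> t htn.
  have htn' : (t != (i + m)%N :> nat) by apply: contra htn => /eqP heq; apply/eqP/val_inj.
  case: (ltnP t (i + m)) => ht; first by rewrite IH1 // mul0r.
  by rewrite /D Dentry ifN ?mulr0 // -leqNgt; lia.
- apply: (le_trans (ler_norm_sum _ _ _)).
  apply: (@le_trans _ _ (\sum_(t < r) r%:R ^+ m * h%:R ^+ (s - i))).
    apply: ler_sum => t _; rewrite normrM.
    case: (ltnP t i) => hti.
      by rewrite IH1 ?normr0 ?mul0r ?mulr_ge0 ?exprn_ge0 //; lia.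
    case: (ltnP t s) => hts; last first.
      by rewrite /D Dentry ifN ?normr0 ?mulr0 ?mulr_ge0 ?exprn_ge0 // -leqNgt.
    rewrite /D Dentry hts normr_nat.
    have -> : (s - i = (t - i) + (s - t))%N by lia.
    rewrite exprD mulrA; apply: ler_pM => //.
    by rewrite -natrX Num.Theory.ler_nat bin_le_exp.
  by rewrite sumr_const card_ord exprSr mulrAC mulr_natr.
Qed.

Lemma diffbound (R : realType) (r n h : nat) (x : 'cV[R]_r)
  (H : forall (i : 'I_r) k, (k < n)%N -> `|(Jmx R r ^+ k *m x) i 0| <= 1) :
  forall m k (i : 'I_r), (k + m * h < n)%N ->
  `|((Jmx R r ^+ h - 1) ^+ m *m (Jmx R r ^+ k *m x)) i 0| <= 2 ^+ m.
Proof.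
elim=> [|m IH] k i hk.
  by rewrite expr0 mul1mx expr0; apply: H; rewrite mul0n addn0 in hk.
have mE (A B : 'M[R]_r) : A * B = A *m B by [].
rewrite exprSr mE -mulmxA mulmxBl mul1mx mulmxA -mE -exprD.
have subE (u v : 'cV[R]_r) (i0 : 'I_r) : (u - v) i0 0 = u i0 0 - v i0 0 by rewrite !mxE.
rewrite mulmxBr subE.
apply: (le_trans (ler_normB _ _)).
rewrite exprS mulrDl mul1r lerD //.
  by apply: IH; rewrite mulSn in hk; lia.
by apply: IH; rewrite mulSn in hk; lia.
Qed.

Theorem lemmaB2 (R : realType) (r : nat) (hr : (1 <= r)%N) :
  (exists C : R, forall (n : nat) (x : 'I_r -> R), (2 <= n)%N ->
      (forall j : 'I_r, `|x j| <= (n%:R)^-j) ->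
      forall (i : 'I_r) (k : nat), (k < n)%N ->
        `|\sum_(j < r) ((Jmx R r) ^+ k) i j * x j| <= C)
  /\
  (exists C' : R, 0 < C' /\ forall (n : nat) (x : 'I_r -> R), (2 <= n)%N ->
      (forall (i : 'I_r) (k : nat), (k < n)%N ->
        `|\sum_(j < r) ((Jmx R r) ^+ k) i j * x j| <= 1) ->
      forall j : 'I_r, `|x j| <= C' * (n%:R)^-j).
Proof.
split.
  exists r%:R => n x hn hx i k hk.
  apply: (le_trans (ler_norm_sum _ _ _)).
  apply: (@le_trans _ _ (\sum_(j < r) (1:R))); last by rewrite sumr_const card_ord.
  apply: ler_sum => j _; rewrite normrM Jpow.
  case: leqP => hij; last by rewrite normr0 mul0r.
  rewrite normr_nat.
  have hn0 : (0 < n%:R :> R) by rewrite ltr0n; lia.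
  apply: (le_trans (ler_wpM2l (ler0n _ _) (hx j))).
  rewrite ler_pdivrMr ?exprn_gt0 // mul1r -natrX ler_nat.
  apply: (leq_trans (bin_le_exp _ _)).
  have hke : (k ^ (j - i) <= n ^ (j - i))%N.
    by elim: (j - i)%N => // e IHe; rewrite !expnS leq_mul // ltnW.
  apply: (leq_trans hke); apply: leq_pexp2l; lia.
pose a : R := (2 ^ r)%:R.
pose b : R := (r ^ r)%:R.
pose c : R := 1 + r%:R * b.
pose E : R := a * c ^+ r.
have a1 : 1 <= a by rewrite /a ler1n expn_gt0.
have b0 : 0 <= b by [].
have c1 : 1 <= c by rewrite /c lerDl mulr_ge0.
have E1 : 1 <= E by rewrite /E -[1]mulr1 ler_pM // exprn_ege1.
exists (E * ((2 * r) ^ r)%:R); split.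
  by rewrite mulr_gt0 ?ltr0n ?expn_gt0 ?muln_gt0 ?hr // (lt_le_trans ltr01 E1).
have hC (N : nat) : (N <= (2 * r) ^ r)%N -> N%:R <= E * ((2 * r) ^ r)%:R.
  move=> hN; apply: (le_trans (_ : N%:R <= ((2 * r) ^ r)%:R)); first by rewrite ler_nat.
  by rewrite ler_peMl.
move=> n x hn Hx j.
pose X : 'cV[R]_r := \col_(l < r) x l.
have H (i : 'I_r) k : (k < n)%N -> `|(Jmx R r ^+ k *m X) i 0| <= 1.
  move=> hk; rewrite mxE; under eq_bigr do rewrite mxE; exact: Hx.
have hn0 : (0 < n)%N by lia.
have hx1 (l : 'I_r) : `|x l| <= 1.
  by have := H l 0%N hn0; rewrite expr0 mul1mx mxE.
rewrite ler_pdivlMr ?exprn_gt0 ?ltr0n //.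
case: (leqP r n) => hrn; last first.
  apply: (le_trans (_ : _ <= 1 * (n%:R ^+ j))); first by rewrite ler_wpM2r ?exprn_ge0.
  rewrite mul1r -natrX; apply: hC.
  apply: (@leq_trans (r ^ r)).
    apply: (@leq_trans (r ^ j)).
      by elim: (nat_of_ord j) => // e IHe; rewrite !expnS leq_mul // ltnW.
    by apply: leq_pexp2l => //; apply: ltnW.
  by rewrite leq_exp2r //; lia.
pose h := (n %/ r)%N.
have hh : (0 < h)%N by rewrite /h divn_gt0.
have hrh : (h * r <= n)%N by apply: leq_divM.
have hnh : (n < h.+1 * r)%N by apply: ltn_ceil.
pose z (l : 'I_r) : R := h%:R ^+ l * x l.
have nz (l : 'I_r) : `|z l| = h%:R ^+ l * `|x l|.
  by rewrite /z normrM normrX normr_nat.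
pose o : 'I_r := Ordinal hr.
have key (l : 'I_r) : `|z l| <= a + b * \sum_(s < r) (if (l < s)%N then `|z s| else 0).
  have hcond : (0 + l * h < n)%N.
    have := ltn_ord l; move=> hl.
    have : (l.+1 * h <= r * h)%N by rewrite leq_mul2r hl orbT.
    by rewrite mulSn; nia.
  have hD := @diffbound R r n h X H l 0%N o hcond.
  set Dl := (Jmx R r ^+ h - 1) ^+ l in hD.
  rewrite expr0 mul1mx mxE in hD.
  have d0 : Dl o l = h%:R ^+ l by case: (Dpow R r h l o l) => _ -> //.
  have dz (s : 'I_r) : (s < l)%N -> Dl o s = 0 by move=> hs; case: (Dpow R r h l o s) => H1 _ _; apply: H1.
  have db (s : 'I_r) : `|Dl o s| <= r%:R ^+ l * h%:R ^+ s.
    by case: (Dpow R r h l o s) => _ _; rewrite subn0.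
  rewrite (bigD1 l) //= d0 [X l 0]mxE in hD.
  set rest := \sum_(s < r | s != l) _ in hD.
  have -> : z l = (h%:R ^+ l * x l + rest) - rest by rewrite addrK.
  apply: (le_trans (ler_normB _ _)); apply: lerD.
    by apply: (le_trans hD); rewrite /a -natrX ler_nat leq_pexp2l //; apply: ltnW.
  apply: (le_trans (ler_norm_sum _ _ _)).
  rewrite [X in _ <= b * X](bigD1 l) //= ltnn add0r mulr_sumr.
  apply: ler_sum => s hs; rewrite mxE normrM.
  case: (ltngtP l s) => hls; last first.
  - by move/val_inj: hls => hls; rewrite hls eqxx in hs.
  - by rewrite dz // normr0 mul0r mulr0.
  rewrite nz mulrA ler_wpM2r //.
  apply: (le_trans (db s)); rewrite ler_wpM2r ?exprn_ge0 // /b -natrX ler_nat.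
  by apply: leq_pexp2l => //; apply: ltnW.
have bound (d : nat) (l : 'I_r) : (r - l <= d)%N -> `|z l| <= a * c ^+ d.
  elim: d l => [|d IHd] l hl; first by have := ltn_ord l; lia.
  apply: (le_trans (key l)).
  have hS : \sum_(s < r) (if (l < s)%N then `|z s| else 0) <= (a * c ^+ d) *+ r.
    rewrite -[r in X in _ <= X]card_ord -sumr_const; apply: ler_sum => s _.
    case: ifP => hs; first by apply: IHd; lia.
    by rewrite mulr_ge0 ?exprn_ge0 // (le_trans ler01).
  have hcd : 1 <= c ^+ d by exact: exprn_ege1.
  have hA : a <= a * c ^+ d by rewrite ler_peMr // (le_trans ler01).
  apply: (le_trans (lerD (lexx a) (ler_wpM2l b0 hS))).
  rewrite exprSr /c -mulr_natr.
  set A := a * c ^+ d in hA *.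
  have -> : a * (c ^+ d * (1 + r%:R * b)) = A + A * r%:R * b by rewrite /A; ring.
  by rewrite [b * _]mulrC lerD2r.
have hnj : (n ^ j <= (2 * r) ^ r * h ^ j)%N.
  have h1 : (n <= 2 * r * h)%N by nia.
  apply: (@leq_trans ((2 * r * h) ^ j)).
    by elim: (nat_of_ord j) => // e IHe; rewrite !expnS leq_mul.
  rewrite expnMn leq_mul2r leq_pexp2l ?orbT //; [lia | exact: ltnW].
apply: (le_trans (_ : _ <= `|x j| * ((2 * r) ^ r * h ^ j)%:R)).
  by rewrite ler_wpM2l // -natrX ler_nat.
rewrite natrM natrX natrX mulrCA (mulrC `|x j|) -nz [X in _ <= X]mulrC ler_wpM2l ?exprn_ge0 //.
exact: (bound r j (leq_subr _ _)).
Qed.
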